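(* Let $\mathfrak{g}=\mathfrak{gl}(p,q)$, $k\ge1$, and let all $X_i\in\mathfrak g$ be homogeneous. Then: (a) $P_{2k+1}(X_1,\ldots,X_{2k+1})=(2k+1)\,B(\mathcal P_{2k}(X_1,\ldots,X_{2k})\mid X_{2k+1})$; $\Lambda_{2k}(X_1,\ldots,X_{2k})=0$; and $\Lambda_{2k+1}(X_1,\ldots,X_{2k+1})=(2k+1)\,B(\mathcal A_{2k}(X_1,\ldots,X_{2k})\mid X_{2k+1})$. (b) $\displaystyle\sum_{\sigma\in\mathfrak S_{2k}}\epsilon(\sigma)\epsilon(\sigma,\mathcal X)[X_{\sigma(1)},X_{\sigma(2)}]\cdots[X_{\sigma(2k-1)},X_{\sigma(2k)}]=2^k\mathcal A_{2k}(X_1,\ldots,X_{2k})$. (c) For each $j$ with $0\le j\le k$, $\displaystyle\sum_{\sigma\in\mathfrak S_{2k+1}}\epsilon(\sigma)\epsilon(\sigma,\mathcal X)[X_{\sigma(1)},X_{\sigma(2)}]\cdots[X_{\sigma(2j-1)},X_{\sigma(2j)}]\,X_{\sigma(2j+1)}\,[X_{\sigma(2j+2)},X_{\sigma(2j+3)}]\cdots[X_{\sigma(2k)},X_{\sigma(2k+1)}]=2^k\mathcal A_{2k+1}(X_1,\ldots,X_{2k+1})$.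
   Context: $\mathfrak{gl}(p,q)=\mathrm{End}(V)$ for a $\mathbb Z_2$-graded complex vector space $V=V_{\bar0}\oplus V_{\bar1}$ with $\dim V_{\bar0}=p$, $\dim V_{\bar1}=q$; homogeneous elements have degrees denoted by lower-case letters, products are compositions, and $[X,Y]=XY-(-1)^{xy}YX$. The super trace is $\mathrm{str}\begin{pmatrix}a&b\\c&d\end{pmatrix}=\mathrm{tr}(a)-\mathrm{tr}(d)$ and $B(Z\mid T)=\mathrm{str}(ZT)$. For $\mathcal X=(X_1,\dots,X_m)$ and $\sigma\in\mathfrak S_m$, $\epsilon(\sigma)$ is the sign of $\sigma$ and $\epsilon(\sigma,\mathcal X)=(-1)^K$ with $K$ the number of pairs $i<j$ such that $\sigma(i)>\sigma(j)$ and $X_{\sigma(i)},X_{\sigma(j)}$ are both odd. Define $\mathcal P_m(X_1,\dots,X_m)=\sum_{\sigma\in\mathfrak S_m}\epsilon(\sigma,\mathcal X)X_{\sigma(1)}\cdots X_{\sigma(m)}$, $\mathcal A_m(X_1,\dots,X_m)=\sum_{\sigma}\epsilon(\sigma)\epsilon(\sigma,\mathcal X)X_{\sigma(1)}\cdots X_{\sigma(m)}$, $P_m=\mathrm{str}\circ\mathcal P_m$, $\Lambda_m=\mathrm{str}\circ\mathcal A_m$. In (c), for $j=0$ there are no brackets before $X_{\sigma(1)}$ and for $j=k$ none after $X_{\sigma(2k+1)}$. *)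

(* Defs.v *)
From mathcomp Require Import all_boot all_algebra all_fingroup.
From mathcomp Require Import reals complex.
Set Implicit Arguments. Unset Strict Implicit. Unset Printing Implicit Defensive.
Import GRing.Theory.
Local Open Scope ring_scope.

(* gl(p,q) = End(V), V = V_0 (+) V_1, dim V_0 = p, dim V_1 = q, realised as
   (p+q) x (p+q) matrices over the complex numbers C = R[i] (R : realType),
   in the block form ( a b ; c d ) with a : p x p, d : q x q. *)

Section GL.
Variable (C : fieldType) (p q : nat).
Notation M := 'M[C]_(p + q).

(* homogeneous of degree 0 (even): off-diagonal blocks vanish;
   homogeneous of degree 1 (odd): diagonal blocks vanish *)
Definition homog (x : bool) (A : M) : Prop :=
  if x then ulsubmx A = 0 /\ drsubmx A = 0
  else ursubmx A = 0 /\ dlsubmx A = 0.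

Definition str (A : M) : C := \tr (ulsubmx A) - \tr (drsubmx A).
Definition Bform (Z T : M) : C := str (Z *m T).

Definition sbr (x y : bool) (X Y : M) : M :=
  X *m Y - ((-1) ^+ (x && y)) *: (Y *m X).

Definition mprod (s : seq M) : M := foldr (@mulmx C _ _ _) 1%:M s.

Definition oddinv (m : nat) (d : 'I_m -> bool) (s : 'S_m) : nat :=
  \sum_(i < m) \sum_(j < m) ((i < j)%N && (s j < s i)%N && d (s i) && d (s j)).
Definition eps_sX (m : nat) (d : 'I_m -> bool) (s : 'S_m) : C :=
  (-1) ^+ oddinv d s.
Definition eps (m : nat) (s : 'S_m) : C := (-1) ^+ odd_perm s.

Definition permseq (m : nat) (X : 'I_m -> M) (s : 'S_m) : seq M :=
  [seq X (s i) | i <- enum 'I_m].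
Definition permseqd (m : nat) (d : 'I_m -> bool) (X : 'I_m -> M) (s : 'S_m)
  : seq (bool * M) := [seq (d (s i), X (s i)) | i <- enum 'I_m].

Definition calP (m : nat) (d : 'I_m -> bool) (X : 'I_m -> M) : M :=
  \sum_(s : 'S_m) eps_sX d s *: mprod (permseq X s).
Definition calA (m : nat) (d : 'I_m -> bool) (X : 'I_m -> M) : M :=
  \sum_(s : 'S_m) (eps s * eps_sX d s) *: mprod (permseq X s).
Definition Pm (m : nat) (d : 'I_m -> bool) (X : 'I_m -> M) : C := str (calP d X).
Definition Lm (m : nat) (d : 'I_m -> bool) (X : 'I_m -> M) : C := str (calA d X).

Fixpoint brpairs (s : seq (bool * M)) : seq M :=
  match s with
  | (x, X) :: (y, Y) :: t => sbr x y X Y :: brpairs t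
  | _ => [::]
  end.

(* [X_s1,X_s2]...[X_s(2j-1),X_s(2j)] X_s(2j+1) [X_s(2j+2),X_s(2j+3)]...[..] *)
Definition brmixed (j : nat) (s : seq (bool * M)) : M :=
  mprod (brpairs (take j.*2 s)) *m (nth (false, 0) s j.*2).2
    *m mprod (brpairs (drop j.*2.+1 s)).

End GL.
Arguments eps {C m} s.
Arguments eps_sX {C m} d s.
Arguments oddinv {m} d s.

(* Main.v *)
Require Import Defs.
From mathcomp Require Import all_boot all_algebra all_fingroup.
From mathcomp Require Import reals complex.
From mathcomp Require Import zify ring.
Set Implicit Arguments. Unset Strict Implicit. Unset Printing Implicit Defensive.
Import GRing.Theory.
Local Open Scope ring_scope.

Section Signs.
Variable C : fieldType.
Local Notation sg b := ((-1 : C) ^+ (b : bool)).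

Lemma eps_sXE m (d : 'I_m -> bool) (s : 'S_m) :
  eps_sX d s = \prod_(i < m) \prod_(j < m) sg ((i < j)%N && (s j < s i)%N && d (s i) && d (s j)).
Proof.
rewrite /eps_sX /oddinv -prodrXr; apply: eq_bigr => i _; by rewrite -prodrXr.
Qed.

Lemma prod_tri m (F : 'I_m -> 'I_m -> C) :
  \prod_(a < m) \prod_(b < m) F a b =
  (\prod_(a < m) \prod_(b < m | (a < b)%N) (F a b * F b a)) * \prod_(a < m) F a a.
Proof.
have E a : \prod_(b < m) F a b =
   (\prod_(b < m | (a < b)%N) F a b) * (\prod_(b < m | (b < a)%N) F a b) * F a a.
  rewrite (bigID (fun b : 'I_m => (a < b)%N)) /= -mulrA; congr (_ * _).
  rewrite (bigD1 a) /= ?ltnn // mulrC; congr (_ * _).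
  apply: eq_bigl => b; rewrite -leqNgt ltn_neqAle andbC; congr (_ && _).
rewrite (eq_bigr _ (fun a _ => E a)) !big_split /=; congr (_ * _).
under [RHS]eq_bigr do rewrite big_split.
rewrite [RHS]big_split /=; congr (_ * _).
under eq_bigr do rewrite big_mkcond.
rewrite exchange_big; apply: eq_bigr => a _.
by rewrite [RHS]big_mkcond.
Qed.

Lemma prod_tri1 m (F : 'I_m -> 'I_m -> C) : (forall a, F a a = 1) ->
  \prod_(a < m) \prod_(b < m) F a b =
  \prod_(a < m) \prod_(b < m | (a < b)%N) (F a b * F b a).
Proof. by move=> F1; rewrite prod_tri [X in _ * X]big1 ?mulr1. Qed.

Lemma gtF (x y : nat) : (x < y)%N -> (y < x)%N = false.
Proof. by move=> h; rewrite ltnNge ltnW. Qed.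

Lemma eps_sX_mul m (d : 'I_m -> bool) (s t : 'S_m) :
  eps_sX d (t * s)%g = eps_sX d s * eps_sX (fun i => d (s i)) t :> C.
Proof.
rewrite !eps_sXE.
have R1 (G : 'I_m -> 'I_m -> C) : \prod_(i < m) \prod_(j < m) G i j
   = \prod_(a < m) \prod_(b < m) G (t^-1 a)%g (t^-1 b)%g.
  rewrite (reindex_inj (@perm_inj _ t^-1%g)); apply: eq_bigr => a _.
  by rewrite (reindex_inj (@perm_inj _ t^-1%g)).
rewrite R1 [X in _ = _ * X]R1.
rewrite [LHS]prod_tri1; last by move=> a; rewrite ltnn.
rewrite [X in _ = X * _]prod_tri1; last by move=> a; rewrite ltnn.
rewrite [X in _ = _ * X]prod_tri1; last by move=> a; rewrite ltnn.
rewrite -big_split; apply: eq_bigr => a _; rewrite -big_split; apply: eq_bigr => b ab /=.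
rewrite !permM !permKV -!signr_addb; congr (_ ^+ _).
rewrite ab (gtF ab).
case: (ltngtP (t^-1 a)%g (t^-1 b)%g) => [h|h|h].
- 
  case: (ltngtP (s a) (s b)) => [h2|h2|h2].
  + by case: (d (s a)); case: (d (s b)).
  + by case: (d (s a)); case: (d (s b)).
  + by move: ab; rewrite (perm_inj (val_inj h2)) ltnn.
- 
  case: (ltngtP (s a) (s b)) => [h2|h2|h2].
  + by case: (d (s a)); case: (d (s b)).
  + by case: (d (s a)); case: (d (s b)).
  + by move: ab; rewrite (perm_inj (val_inj h2)) ltnn.
- by move: ab; rewrite (perm_inj (val_inj h)) ltnn.
Qed.


Lemma eps_mul m (s t : 'S_m) : eps (t * s)%g = eps t * eps s :> C.
Proof. by rewrite /eps odd_permM signr_addb. Qed.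

Lemma eps_tperm m (i j : 'I_m) : i != j -> eps (tperm i j) = -1 :> C.
Proof. by move=> ij; rewrite /eps odd_tperm ij expr1. Qed.

Lemma eps_sX_adj m (e : 'I_m -> bool) (i j : 'I_m) : nat_of_ord j = i.+1 ->
  eps_sX e (tperm i j) = sg (e i && e j).
Proof.
move=> ji; rewrite eps_sXE.
have ij : i != j by apply/eqP => h; move: ji; rewrite h; lia.
have key (a b : 'I_m) : ((a < b)%N && (tperm i j b < tperm i j a)%N) = (a == i) && (b == j).
  have Hv (x y : 'I_m) : x <> y -> nat_of_ord x <> nat_of_ord y by move=> h h'; apply: h; apply: val_inj.
  have ijv : nat_of_ord i <> nat_of_ord j by lia.
  change (((a < b)%N && (tperm i j b < tperm i j a)%N) = (nat_of_ord a == nat_of_ord i) && (nat_of_ord b == nat_of_ord j)).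
  case: (tpermP i j a) => [->|->|ai aj]; case: (tpermP i j b) => [->|->|bi bj];
  try (move/Hv: ai => ai; move/Hv: aj => aj); try (move/Hv: bi => bi; move/Hv: bj => bj).
  all: try lia.
rewrite (bigD1 i) //= [X in _ * X]big1 ?mulr1; last first.
  by move=> a ai; apply: big1 => b _; rewrite key (negbTE ai).
rewrite (bigD1 j) //= [X in _ * X]big1 ?mulr1; last first.
  by move=> b bj; rewrite key (negbTE bj) andbF.
by rewrite key !eqxx /= tpermL tpermR andbC.
Qed.

End Signs.


Section Shapes.
Variables (C : fieldType) (p q : nat).
Local Notation M := 'M[C]_(p + q).
Local Notation sg b := ((-1 : C) ^+ (b : bool)).
Local Notation x0 := ((false, 0) : bool * M).

Fixpoint sevf (sh : seq bool) (g : nat -> bool * M) (o : nat) : M :=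
  match sh with
  | [::] => 1%:M
  | false :: sh' => (g o).2 *m sevf sh' g o.+1
  | true :: sh' => sbr (g o).1 (g o.+1).1 (g o).2 (g o.+1).2 *m sevf sh' g o.+2
  end.

Fixpoint wd (sh : seq bool) : nat := if sh is b :: sh' then (b.+1 + wd sh')%N else 0%N.

Lemma wd_cat s1 s2 : wd (s1 ++ s2) = (wd s1 + wd s2)%N.
Proof. by elim: s1 => //= b s1 ->; rewrite addnA. Qed.

Lemma wd_nseq_true k : wd (nseq k true) = k.*2.
Proof. by elim: k => //= k ->; rewrite doubleS. Qed.

Lemma wd_nseq_false k : wd (nseq k false) = k.
Proof. by elim: k => //= k ->. Qed.

Lemma sevf_ext sh g g' o : (forall n, (o <= n < o + wd sh)%N -> g n = g' n) ->
  sevf sh g o = sevf sh g' o.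
Proof.
elim: sh o => [|[] sh IH] o H //=.
- have h0 : g o = g' o by apply: H => /=; lia.
  have h1 : g o.+1 = g' o.+1 by apply: H => /=; lia.
  rewrite h0 h1 (IH o.+2) // => n hn; apply: H => /=; lia.
- have h0 : g o = g' o by apply: H => /=; lia.
  rewrite h0 (IH o.+1) // => n hn; apply: H => /=; lia.
Qed.

Lemma sevf_shift sh g o n : sevf sh g (o + n) = sevf sh (fun i => g (o + i)%N) n.
Proof.
elim: sh n => [|[] sh IH] n //=.
- by rewrite -!addnS IH.
- by rewrite -!addnS IH.
Qed.

Lemma sevf_cat s1 s2 g o :
  sevf (s1 ++ s2) g o = sevf s1 g o *m sevf s2 g (o + wd s1).
Proof.
elim: s1 o => [|[] s1 IH] o /=; first by rewrite mul1mx addn0.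
- by rewrite IH mulmxA addnA addn2.
- by rewrite IH mulmxA addnA addn1.
Qed.

Lemma brpairsE k (L : seq (bool * M)) : size L = k.*2 ->
  mprod (brpairs L) = sevf (nseq k true) (nth x0 L) 0.
Proof.
elim: k L => [|k IH] [|[a A] [|[b B] L]] //=.
rewrite doubleS => -[] /IH ->.
by rewrite -[2%N]addn0 sevf_shift.
Qed.

Lemma brmixedE k j (L : seq (bool * M)) : size L = k.*2.+1 -> (j <= k)%N ->
  brmixed j L = sevf (nseq j true ++ false :: nseq (k - j) true) (nth x0 L) 0.
Proof.
move=> sL jk; rewrite sevf_cat /= wd_nseq_true /brmixed add0n mulmxA.
congr (_ *m _ *m _).
- rewrite (brpairsE (k := j)); last by rewrite size_take sL; case: ltnP => //; lia.
  apply: sevf_ext => n /= hn; rewrite nth_take //; rewrite wd_nseq_true in hn; lia.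
- rewrite (brpairsE (k := k - j)); last by rewrite size_drop sL; lia.
  rewrite -[j.*2.+1]addn0 sevf_shift; apply: sevf_ext => n _.
  by rewrite addn0 nth_drop.
Qed.

Lemma sevf_false (L : seq (bool * M)) :
  sevf (nseq (size L) false) (nth x0 L) 0 = mprod (map snd L).
Proof.
elim: L => //= x L IH; rewrite -IH.
by rewrite -[1%N]addn0 sevf_shift.
Qed.


Definition Phi m (d : 'I_m -> bool) (F : 'S_m -> M) : M :=
  \sum_(s : 'S_m) (eps s * eps_sX d s) *: F s.

Lemma nth_permseqd m d (X : 'I_m -> M) s (i : 'I_m) :
  nth x0 (permseqd d X s) i = (d (s i), X (s i)).
Proof. by rewrite /permseqd (nth_map i) ?size_enum_ord // nth_ord_enum. Qed.

Lemma size_permseqd m d (X : 'I_m -> M) s : size (permseqd d X s) = m.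
Proof. by rewrite size_map size_enum_ord. Qed.

Lemma map_snd_permseqd m d (X : 'I_m -> M) s : map snd (permseqd d X s) = permseq X s.
Proof. by rewrite /permseqd /permseq -map_comp. Qed.

Definition swp (o n : nat) := if n == o then o.+1 else if n == o.+1 then o else n.

Lemma tperm_swp m (o o' i : 'I_m) : nat_of_ord o' = o.+1 ->
  nat_of_ord (tperm o o' i) = swp o i.
Proof.
move=> oo'; rewrite /swp; case: (tpermP o o' i) => [->|->|h1 h2].
- by rewrite eqxx oo'.
- by rewrite oo' eqxx; case: eqP => //; lia.
- have h1' : nat_of_ord i <> nat_of_ord o by move=> h; apply: h1; apply: val_inj.
  have h2' : nat_of_ord i <> nat_of_ord o' by move=> h; apply: h2; apply: val_inj.
  case: eqP => //; case: eqP => //; lia.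
Qed.

Lemma permseqd_swap m d (X : 'I_m -> M) s (o o' : 'I_m) : nat_of_ord o' = o.+1 ->
  forall n, nth x0 (permseqd d X (tperm o o' * s)%g) n = nth x0 (permseqd d X s) (swp o n).
Proof.
move=> oo' n; case: (ltnP n m) => hn.
- have -> : n = nat_of_ord (Ordinal hn) by [].
  by rewrite nth_permseqd permM -(tperm_swp _ oo') nth_permseqd.
- rewrite !nth_default ?size_permseqd // /swp.
  have := ltn_ord o'; case: eqP => [|_]; first lia.
  case: eqP => [|_]; lia.
Qed.

Lemma sevf_swap sh1 sh2 g :
  sevf (sh1 ++ true :: sh2) g 0 = sevf (sh1 ++ false :: false :: sh2) g 0
   - sg ((g (wd sh1)).1 && (g (wd sh1).+1).1) *:
     sevf (sh1 ++ false :: false :: sh2) (fun n => g (swp (wd sh1) n)) 0.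
Proof.
rewrite !sevf_cat !add0n /=.
have -> : sevf sh1 (fun n => g (swp (wd sh1) n)) 0 = sevf sh1 g 0.
  apply: sevf_ext => n /= hn; rewrite /swp; case: eqP => [|_]; first lia.
  case: eqP => [|_] //; lia.
have -> : sevf sh2 (fun n => g (swp (wd sh1) n)) (wd sh1).+2 = sevf sh2 g (wd sh1).+2.
  apply: sevf_ext => n /= hn; rewrite /swp; case: eqP => [|_]; first lia.
  case: eqP => [|_] //; lia.
rewrite /swp eqxx /= eqxx; case: eqP => [|_]; first lia.
rewrite /sbr mulmxBl mulmxBr -!mulmxA -scalemxAl -scalemxAr -!mulmxA.
by [].
Qed.

Lemma Phi_swap m d (o o' : 'I_m) (F : 'S_m -> M) : nat_of_ord o' = o.+1 ->
  \sum_(s : 'S_m) (eps s * eps_sX d s) *: (sg (d (s o) && d (s o')) *: F (tperm o o' * s)%g)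
  = - Phi d F.
Proof.
move=> oo'; have ne : o != o' by apply/eqP => h; move: oo'; rewrite -h; lia.
rewrite /Phi (reindex_inj (can_inj (tpermKg o o'))) /= -sumrN; apply: eq_bigr => s _.
rewrite tpermKg !permM tpermL tpermR eps_mul eps_tperm // eps_sX_mul eps_sX_adj //.
rewrite scalerA -scaleNr; congr (_ *: _).
rewrite [d (s o') && _]andbC; case: (_ && _); rewrite ?expr0 ?expr1; ring.
Qed.

Lemma Phi_red m d (X : 'I_m -> M) sh1 sh2 : (wd sh1 + 2 + wd sh2)%N = m ->
  Phi d (fun s => sevf (sh1 ++ true :: sh2) (nth x0 (permseqd d X s)) 0)
  = 2 *: Phi d (fun s => sevf (sh1 ++ false :: false :: sh2) (nth x0 (permseqd d X s)) 0).
Proof.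
move=> hm.
have h1 : (wd sh1 < m)%N by lia.
have h2 : ((wd sh1).+1 < m)%N by lia.
pose o := Ordinal h1; pose o' := Ordinal h2.
have oo' : nat_of_ord o' = o.+1 by [].
set F := fun s => sevf (sh1 ++ false :: false :: sh2) (nth x0 (permseqd d X s)) 0.
have E s : sevf (sh1 ++ true :: sh2) (nth x0 (permseqd d X s)) 0
    = F s - sg (d (s o) && d (s o')) *: F (tperm o o' * s)%g.
  rewrite sevf_swap /F; congr (_ - _ *: _).
  - by rewrite -[wd sh1]/(nat_of_ord o) -[(wd sh1).+1]/(nat_of_ord o') !nth_permseqd.
  - by apply: sevf_ext => n _; rewrite permseqd_swap.
rewrite /Phi; under eq_bigr do rewrite E scalerBr.
rewrite sumrB (Phi_swap _ _ oo') opprK -/(Phi d F).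
by rewrite scaler_nat mulr2n.
Qed.



Lemma count0_nseq (sh : seq bool) : count id sh = 0%N -> sh = nseq (size sh) false.
Proof. by elim: sh => //= -[] sh IH //= /IH {1}->. Qed.

Lemma wd_false (sh : seq bool) : count id sh = 0%N -> wd sh = size sh.
Proof. by move/count0_nseq => ->; rewrite size_nseq wd_nseq_false. Qed.

Lemma Phi_all m d (X : 'I_m -> M) n sh : count id sh = n -> wd sh = m ->
  Phi d (fun s => sevf sh (nth x0 (permseqd d X s)) 0)
  = 2 ^+ n *: Phi d (fun s => mprod (permseq X s)).
Proof.
elim: n sh => [|n IH] sh hc hw.
- rewrite expr0 scale1r; apply: eq_bigr => s _; congr (_ *: _).
  have := sevf_false (permseqd d X s); rewrite size_permseqd map_snd_permseqd => <-.
  by rewrite {1}(count0_nseq hc) -(wd_false hc) hw.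
- have tin : true \in sh.
    have : (0 < count id sh)%N by rewrite hc.
    by rewrite -has_count => /hasP [[] bin hb].
  set i := index true sh.
  have hi : (i < size sh)%N by rewrite index_mem.
  have E : sh = take i sh ++ true :: drop i.+1 sh.
    by rewrite -[in LHS](cat_take_drop i sh) (drop_nth false hi) (nth_index false tin).
  move: hc hw; rewrite E; set sh1 := take i sh; set sh2 := drop i.+1 sh => hc hw.
  rewrite Phi_red; last by move: hw; rewrite wd_cat /=; lia.
  rewrite (IH (sh1 ++ false :: false :: sh2)).
  + by rewrite scalerA exprS.
  + by move: hc; rewrite !count_cat /=; lia.
  + by move: hw; rewrite !wd_cat /=.
Qed.


Lemma part_b k d (X : 'I_k.*2 -> M) :
  \sum_(s : 'S_k.*2) (eps s * eps_sX d s) *: mprod (brpairs (permseqd d X s))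
  = 2 ^+ k *: calA d X.
Proof.
have := @Phi_all _ d X k (nseq k true).
rewrite count_nseq mul1n wd_nseq_true => /(_ erefl erefl) <-.
by apply: eq_bigr => s _; rewrite (brpairsE (k := k)) // size_permseqd.
Qed.

Lemma part_c k j d (X : 'I_k.*2.+1 -> M) : (j <= k)%N ->
  \sum_(s : 'S_k.*2.+1) (eps s * eps_sX d s) *: brmixed j (permseqd d X s)
  = 2 ^+ k *: calA d X.
Proof.
move=> jk.
have := @Phi_all _ d X k (nseq j true ++ false :: nseq (k - j) true).
rewrite count_cat /= !count_nseq !mul1n wd_cat /= !wd_nseq_true.
have -> : (j + (k - j))%N = k by lia.
have -> : (j.*2 + (k - j).*2.+1)%N = k.*2.+1 by rewrite -!muln2; lia.
move=> /(_ erefl erefl) <-.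
by apply: eq_bigr => s _; rewrite (brmixedE (k := k)) // size_permseqd.
Qed.

End Shapes.


Section Trace.
Variables (C : fieldType) (p q : nat).
Local Notation M := 'M[C]_(p + q).
Local Notation sg b := ((-1 : C) ^+ (b : bool)).

Lemma strD (A B : M) : str (A + B) = str A + str B.
Proof.
rewrite /str.
have -> : ulsubmx (A + B) = ulsubmx A + ulsubmx B by apply/matrixP => i j; rewrite !mxE.
have -> : drsubmx (A + B) = drsubmx A + drsubmx B by apply/matrixP => i j; rewrite !mxE.
rewrite !mxtraceD; ring.
Qed.

Lemma strZ c (A : M) : str (c *: A) = c * str A.
Proof.
rewrite /str.
have -> : ulsubmx (c *: A) = c *: ulsubmx A by apply/matrixP => i j; rewrite !mxE.
have -> : drsubmx (c *: A) = c *: drsubmx A by apply/matrixP => i j; rewrite !mxE.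
rewrite !mxtraceZ; ring.
Qed.

Lemma str0 : str (0 : M) = 0.
Proof. by rewrite -(scale0r 0) strZ mul0r. Qed.

Lemma str_sum (I : Type) (r : seq I) (P : pred I) (F : I -> M) :
  str (\sum_(i <- r | P i) F i) = \sum_(i <- r | P i) str (F i).
Proof. by elim/big_rec2: _ => [|i y1 y2 _ <-]; [exact: str0 | exact: strD]. Qed.

Lemma homog_mul x y (A B : M) : homog x A -> homog y B -> homog (x (+) y) (A *m B).
Proof.
rewrite /homog -[A]submxK -[B]submxK mulmx_block !block_mxKul !block_mxKur
  !block_mxKdl !block_mxKdr.
by case: x y => [] [] [-> ->] [-> ->]; rewrite !mul0mx !mulmx0 !addr0.
Qed.

Lemma homog1 : homog false (1%:M : M).
Proof. by rewrite /homog scalar_mx_block block_mxKur block_mxKdl. Qed.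

Lemma homog_mprod (I : Type) (r : seq I) (dd : I -> bool) (Y : I -> M) :
  (forall i, homog (dd i) (Y i)) ->
  homog (\big[addb/false]_(i <- r) dd i) (mprod [seq Y i | i <- r]).
Proof.
move=> hY; elim: r => [|i r IH]; first by rewrite big_nil; exact: homog1.
by rewrite big_cons /=; apply: homog_mul.
Qed.

Lemma str_swap x y (A B : M) : homog x A -> homog y B ->
  str (A *m B) = sg (x && y) * str (B *m A).
Proof.
rewrite /homog /str -[A]submxK -[B]submxK !mulmx_block !block_mxKul !block_mxKur
  !block_mxKdl !block_mxKdr !mxtraceD.
rewrite (mxtrace_mulC (ulsubmx B)) (mxtrace_mulC (ursubmx B))
  (mxtrace_mulC (dlsubmx B)) (mxtrace_mulC (drsubmx B)).
case: x y => [] [] [-> ->] [-> ->];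
  rewrite ?mul0mx ?mulmx0 ?mxtrace0 /= ?expr0 ?expr1; ring.
Qed.

Lemma sign_prod (I : Type) (r : seq I) (b : I -> bool) (a : bool) :
  \prod_(i <- r) sg (b i && a) = sg (a && \big[addb/false]_(i <- r) b i).
Proof.
elim: r => [|i r IH]; first by rewrite !big_nil andbF.
rewrite !big_cons IH; case: a {IH} => /=; rewrite ?andbF ?expr0 ?mulr1 //.
by rewrite andbT signr_addb.
Qed.

Lemma mprod_rcons (L : seq M) (A : M) : mprod (rcons L A) = mprod L *m A.
Proof.
elim: L => [|B L IH] /=; first by rewrite mulmx1 mul1mx.
by rewrite IH mulmxA.
Qed.

End Trace.


Section Rot.
Variables (C : fieldType) (p q n : nat).
Local Notation M := 'M[C]_(p + q).
Local Notation sg b := ((-1 : C) ^+ (b : bool)).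

Definition rho : 'S_n.+1 := lift_perm ord_max ord0 1.

Lemma wl (k : 'I_n) : widen_ord (leqnSn n) k = lift ord_max k.
Proof. by apply: val_inj; rewrite /= /bump leqNgt ltn_ord. Qed.

Lemma rho_max : rho ord_max = ord0.
Proof. exact: lift_perm_id. Qed.

Lemma rho_lift k : rho (lift ord_max k) = lift ord0 k.
Proof. by rewrite /rho lift_perm_lift perm1. Qed.

Lemma eps_rho : eps rho = sg (odd n) :> C.
Proof. by rewrite /eps /rho odd_lift_perm odd_perm1 /= !addbF. Qed.

Lemma eps_sX_rho (e : 'I_n.+1 -> bool) :
  eps_sX e rho = \prod_(k < n) sg (e (lift ord0 k) && e ord0) :> C.
Proof.
rewrite eps_sXE big_ord_recr /= [X in _ * X]big1 ?mulr1; last first.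
  by move=> b _; rewrite ltnNge -ltnS ltn_ord.
apply: eq_bigr => a _; rewrite big_ord_recr /= [X in X * _]big1 ?mul1r; last first.
  move=> b _; rewrite !wl !rho_lift /= /bump /= !add1n ltnS.
  by case: (ltngtP a b).
by rewrite wl rho_lift rho_max /= ltn_ord /bump leq0n add1n.
Qed.

Lemma permseq_rho (X : 'I_n.+1 -> M) s : permseq X (rho * s)%g
  = rcons [seq X (s (lift ord0 k)) | k <- enum 'I_n] (X (s ord0)).
Proof.
rewrite /permseq enum_ordSr map_rcons -map_comp permM rho_max; congr rcons.
by apply: eq_map => k /=; rewrite permM wl rho_lift.
Qed.

Lemma permseq_0 (X : 'I_n.+1 -> M) s : permseq X s
  = X (s ord0) :: [seq X (s (lift ord0 k)) | k <- enum 'I_n].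
Proof. by rewrite /permseq enum_ordSl /= -map_comp. Qed.

Lemma rot_inv d (X : 'I_n.+1 -> M) (hX : forall i, homog (d i) (X i)) s :
  eps_sX d (rho * s)%g * str (mprod (permseq X (rho * s)%g))
  = eps_sX d s * str (mprod (permseq X s)).
Proof.
rewrite eps_sX_mul eps_sX_rho permseq_rho permseq_0 mprod_rcons /=.
rewrite (str_swap (hX (s ord0)) (@homog_mprod _ _ _ _ (enum 'I_n)
   (fun k => d (s (lift ord0 k))) (fun k => X (s (lift ord0 k))) (fun k => hX _))).
rewrite -sign_prod enumT -mulrA; congr (_ * (_ * _)).
Qed.

End Rot.


Section Part.
Variables (C : fieldType) (n : nat).

Lemma sum_fix_max (F : 'S_n.+1 -> C) :
  \sum_(s : 'S_n.+1 | s ord_max == ord_max) F s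
  = \sum_(s : 'S_n) F (lift_perm ord_max ord_max s).
Proof.
rewrite (reindex (lift_perm (ord_max : 'I_n.+1) (ord_max : 'I_n.+1))); last first.
  pose ulsf i (s : 'S_n.+1) k := odflt k (unlift (s i) (s (lift i k))).
  have ulsfK i (s : 'S_n.+1) k: lift (s i) (ulsf i s k) = s (lift i k).
    rewrite /ulsf; have:= neq_lift i k.
    by rewrite -(can_eq (permK s)) => /unlift_some[] ? ? ->.
  have inj_ulsf: injective (ulsf (ord_max : 'I_n.+1) _).
    move=> s; apply: can_inj (ulsf (s (ord_max : 'I_n.+1)) s^-1%g) _ => k'.
    by rewrite {1}/ulsf ulsfK !permK liftK.
  exists (fun s => perm (inj_ulsf s)) => [s _ | s].
    by apply/permP=> k'; rewrite permE /ulsf lift_perm_lift lift_perm_id liftK.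
  move/(s _ =P _) => si0; apply/permP=> k.
  case: (unliftP (ord_max : 'I_n.+1) k) => [k'|] ->; rewrite ?lift_perm_id //.
  by rewrite lift_perm_lift -{1}si0 permE ulsfK.
by apply: eq_bigl => s; rewrite lift_perm_id eqxx.
Qed.

Lemma sum_rot (F : 'S_n.+1 -> C) : (forall s, F (rho n * s)%g = F s) ->
  \sum_(s : 'S_n.+1) F s = (n.+1)%:R * \sum_(s : 'S_n) F (lift_perm ord_max ord_max s).
Proof.
move=> HF.
pose S r := \sum_(s : 'S_n.+1 | s r == ord_max) F s.
have Srho r : S r = S (rho n r).
  rewrite /S (reindex_inj (mulgI (rho n))) /=; apply: eq_big => s; first by rewrite permM.
  by move=> _; rewrite HF.
have Smax r : S r = S ord_max.
  suff H t : forall r : 'I_n.+1, (n - r)%N = t -> S r = S ord_max by exact: H _ r erefl.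
  elim: t => [|t IH] r0 hr.
  - by have -> : r0 = ord_max by apply: val_inj => /=; have := ltn_ord r0; lia.
  - have hr0 : (r0 < n)%N by lia.
    have -> : r0 = lift ord_max (Ordinal hr0) by apply: val_inj; rewrite /= /bump leqNgt hr0.
    rewrite Srho rho_lift; apply: IH; rewrite /= /bump leq0n add1n /=; lia.
transitivity (\sum_(r < n.+1) S r).
  rewrite /S; under [RHS]eq_bigr do rewrite big_mkcond.
  rewrite exchange_big /=; apply: eq_bigr => s _.
  rewrite -big_mkcond (big_pred1 (s^-1 ord_max))%g // => r /=.
  by rewrite -{1}(permKV s ord_max) (inj_eq perm_inj).
under eq_bigr do rewrite Smax.
by rewrite sumr_const card_ord /S sum_fix_max mulr_natl.
Qed.

End Part.


Section Final.
Variables (C : fieldType) (p q n : nat).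
Local Notation M := 'M[C]_(p + q).
Local Notation sg b := ((-1 : C) ^+ (b : bool)).
Local Notation w := (widen_ord (leqnSn n)).

Lemma Lw (s : 'S_n) k : lift_perm ord_max ord_max s (w k) = w (s k).
Proof. by rewrite !wl lift_perm_lift. Qed.

Lemma eps_lift (s : 'S_n) : eps (lift_perm ord_max ord_max s) = eps s :> C.
Proof. by rewrite /eps odd_lift_perm addbb. Qed.

Lemma eps_sX_lift d (s : 'S_n) :
  eps_sX d (lift_perm ord_max ord_max s) = eps_sX (fun i => d (w i)) s :> C.
Proof.
rewrite !eps_sXE big_ord_recr /= [X in _ * X]big1 ?mulr1; last first.
  by move=> b _; rewrite ltnNge -ltnS ltn_ord.
apply: eq_bigr => a _; rewrite big_ord_recr /= [X in _ * X](_ : _ = 1).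
  by rewrite mulr1; apply: eq_bigr => b _; rewrite !Lw.
by rewrite lift_perm_id Lw /= [(n < s a)%N]ltnNge (ltnW (ltn_ord (s a))) /= ?andbF.
Qed.

Lemma permseq_lift (X : 'I_n.+1 -> M) (s : 'S_n) :
  permseq X (lift_perm ord_max ord_max s) = rcons (permseq (fun i => X (w i)) s) (X ord_max).
Proof.
rewrite /permseq enum_ordSr map_rcons -map_comp lift_perm_id; congr rcons.
by apply: eq_map => k /=; rewrite Lw.
Qed.

Lemma partP d (X : 'I_n.+1 -> M) : (forall i, homog (d i) (X i)) ->
  Pm d X = (n.+1)%:R * Bform (calP (fun i => d (w i)) (fun i => X (w i))) (X ord_max).
Proof.
move=> hX; rewrite /Pm /calP str_sum.
under eq_bigr do rewrite strZ.
rewrite (sum_rot (F := fun s => eps_sX d s * str (mprod (permseq X s)))); last first.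
  by move=> s; apply: rot_inv.
congr (_ * _); rewrite /Bform mulmx_suml str_sum; apply: eq_bigr => s _.
by rewrite -scalemxAl strZ eps_sX_lift permseq_lift mprod_rcons.
Qed.

Lemma partL d (X : 'I_n.+1 -> M) : (forall i, homog (d i) (X i)) -> ~~ odd n ->
  Lm d X = (n.+1)%:R * Bform (calA (fun i => d (w i)) (fun i => X (w i))) (X ord_max).
Proof.
move=> hX hn; rewrite /Lm /calA str_sum.
under eq_bigr do rewrite strZ.
rewrite (sum_rot (F := fun s => eps s * eps_sX d s * str (mprod (permseq X s)))); last first.
  move=> s; rewrite eps_mul eps_rho (negbTE hn) expr0 mul1r -!mulrA; congr (_ * _).
  exact: rot_inv.
congr (_ * _); rewrite /Bform mulmx_suml str_sum; apply: eq_bigr => s _.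
by rewrite -scalemxAl strZ eps_sX_lift eps_lift permseq_lift mprod_rcons.
Qed.

Lemma partL0 d (X : 'I_n.+1 -> M) : (forall i, homog (d i) (X i)) -> odd n ->
  (2%:R : C) != 0 -> Lm d X = 0.
Proof.
move=> hX hn h2; rewrite /Lm /calA str_sum.
under eq_bigr do rewrite strZ.
set S := \sum_s _.
have : S = - S.
  rewrite {1}/S (reindex_inj (mulgI (rho n))) /= -sumrN; apply: eq_bigr => s _.
  rewrite eps_mul eps_rho hn expr1 -!mulrA (rot_inv hX); ring.
move/eqP; rewrite -subr_eq0 opprK -mulr2n -mulr_natl mulf_eq0 (negbTE h2) /=.
by move/eqP.
Qed.

End Final.


Theorem proposition4p1 (R : realType) (p q k : nat) (hk : (1 <= k)%N) :
  (* (a) *)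
  (forall (d : 'I_k.*2.+1 -> bool) (X : 'I_k.*2.+1 -> 'M[R[i]]_(p + q)),
     (forall i, homog (d i) (X i)) ->
     Pm d X = (k.*2.+1)%:R * Bform (calP (fun i => d (widen_ord (leqnSn _) i))
                                         (fun i => X (widen_ord (leqnSn _) i)))
                                   (X ord_max)
  /\ Lm d X = (k.*2.+1)%:R * Bform (calA (fun i => d (widen_ord (leqnSn _) i))
                                         (fun i => X (widen_ord (leqnSn _) i)))
                                   (X ord_max)) /\
  (forall (d : 'I_k.*2 -> bool) (X : 'I_k.*2 -> 'M[R[i]]_(p + q)),
     (forall i, homog (d i) (X i)) -> Lm d X = 0) /\
  (* (b) *)
  (forall (d : 'I_k.*2 -> bool) (X : 'I_k.*2 -> 'M[R[i]]_(p + q)),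
     (forall i, homog (d i) (X i)) ->
     \sum_(s : 'S_k.*2) (eps s * eps_sX d s) *: mprod (brpairs (permseqd d X s))
       = 2 ^+ k *: calA d X) /\
  (* (c) *)
  (forall (j : nat), (j <= k)%N ->
   forall (d : 'I_k.*2.+1 -> bool) (X : 'I_k.*2.+1 -> 'M[R[i]]_(p + q)),
     (forall i, homog (d i) (X i)) ->
     \sum_(s : 'S_k.*2.+1) (eps s * eps_sX d s) *: brmixed j (permseqd d X s)
       = 2 ^+ k *: calA d X).
Proof.
split; [|split; [|split]].
- move=> d X hX; split; first exact: partP.
  by apply: partL => //; rewrite odd_double.
- case: k hk => // k _ d X hX.
  have h2 : (2%:R : R[i]) != 0 by rewrite Num.Theory.pnatr_eq0.
  have ho : odd (k.*2.+1) by rewrite /= odd_double.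
  exact: (@partL0 _ p q (k.*2.+1) d X hX ho h2).
- move=> d X hX; exact: part_b.
- move=> j jk d X hX; exact: part_c.
Qed.
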